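(* Let $\Sigma$ be a non-empty alphabet. For every pair $(\mathcal{P},\mathcal{N})$ of finite sets of parity automata over $\Sigma$, if there is an ultimately periodic word $w=u\cdot v^\omega\in\Sigma^\omega$ accepted by all automata in $\mathcal{P}$ and rejected by all automata in $\mathcal{N}$, then there is such a word $w=u'\cdot(v')^\omega$ with $u'\in\Sigma^*$, $v'\in\Sigma^+$ and $|u'|+|v'|\le 2^n-1+2^k$, where $n:=\sum_{A\in\mathcal{P}\cup\mathcal{N}}|Q_A|$ and $k:=\sum_{A\in\mathcal{P}\cup\mathcal{N}}|Q_A|^2\cdot n_A$, with $n_A:=|\{\pi_A(q):q\in Q_A\}|$.
   Context: A parity automaton is $A=(Q,\Sigma,I,\delta,\pi)$ with $Q=Q_A$ a finite non-empty set of states, $I\subseteq Q$, $\delta:Q\times\Sigma\to2^Q$, and priority function $\pi=\pi_A:Q\to\mathbb{N}$. A run on $w\in\Sigma^\omega$ is $\rho\in Q^\omega$ with $\rho[0]\in I$ and $\rho[i+1]\in\delta(\rho[i],w[i])$ for all $i$; $w$ is accepted if some run has the maximal priority occurring infinitely often even. An ultimately periodic word is $u\cdot v^\omega$ with $u\in\Sigma^*$, $v\in\Sigma^+$. *)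

(* Defs.v *)
From mathcomp Require Import all_boot.
From Stdlib Require List.
Set Implicit Arguments. Unset Strict Implicit. Unset Printing Implicit Defensive.

Record pa (S : finType) := PA {
  pa_Q : finType;
  pa_I : {set pa_Q};
  pa_delta : pa_Q -> S -> {set pa_Q};
  pa_pri : pa_Q -> nat;
  pa_Q_nonempty : 0 < #|pa_Q|
}.

Definition is_run (S : finType) (A : pa S) (w : nat -> S) (rho : nat -> pa_Q A) : Prop :=
  rho 0 \in pa_I A /\ forall i, rho i.+1 \in pa_delta (rho i) (w i).

Definition inf_often (f : nat -> nat) (p : nat) : Prop :=
  forall N, exists i, N <= i /\ f i = p.

Definition accepts (S : finType) (A : pa S) (w : nat -> S) : Prop :=
  exists rho : nat -> pa_Q A, is_run w rho /\
    exists p, inf_often (fun i => pa_pri (rho i)) p /\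
              (forall q, inf_often (fun i => pa_pri (rho i)) q -> q <= p) /\
              ~~ odd p.

(* the ultimately periodic word u . v^omega (x0 is an irrelevant default,
   only used when v is empty) *)
Definition upw (S : finType) (x0 : S) (u v : seq S) (i : nat) : S :=
  if i < size u then nth x0 u i else nth x0 v ((i - size u) %% size v).

Definition nstates (S : finType) (A : pa S) : nat := #|pa_Q A|.
Definition npri (S : finType) (A : pa S) : nat := size (undup [seq pa_pri q | q <- enum (pa_Q A)]).

(* Main.v *)
Require Import Defs.
From mathcomp Require Import all_boot zify.
From Stdlib Require List.
From Stdlib Require Import Classical ClassicalEpsilon.
Set Implicit Arguments. Unset Strict Implicit. Unset Printing Implicit Defensive.

Fixpoint steps (S : finType) (A : pa S) (p : pa_Q A) (x : seq S) (s : seq (pa_Q A)) : bool :=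
  match x, s with
  | [::], [::] => true
  | a :: x', r :: s' => (r \in pa_delta p a) && steps r x' s'
  | _, _ => false
  end.

Definition mpri (S : finType) (A : pa S) (s : seq (pa_Q A)) := \max_(r <- s) pa_pri r.

Definition pth (S : finType) (A : pa S) (p : pa_Q A) (x : seq S) (q : pa_Q A) (m : nat) :=
  exists s, steps p x s /\ last p s = q /\ m = mpri s.

Definition reach (S : finType) (A : pa S) (x : seq S) (q : pa_Q A) :=
  exists p, p \in pa_I A /\ exists m, pth p x q m.
Arguments reach {S} A x q.

Lemma steps_size (S : finType) (A : pa S) (p : pa_Q A) x s : steps p x s -> size s = size x.
Proof.
elim: x p s => [|a x IH] p [|r s] //= /andP[_ H]; by rewrite (IH _ _ H).
Qed.

Lemma steps_cat (S : finType) (A : pa S) (p : pa_Q A) x z s1 s2 :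
  size s1 = size x -> steps p (x ++ z) (s1 ++ s2) = steps p x s1 && steps (last p s1) z s2.
Proof.
elim: x p s1 => [|a x IH] p [|r s1] //= [Hs]; by rewrite IH // andbA.
Qed.

Lemma steps_nth (S : finType) (A : pa S) (p : pa_Q A) x s d e :
  steps p x s -> forall k, k < size x ->
  nth d (p :: s) k.+1 \in pa_delta (nth d (p :: s) k) (nth e x k).
Proof.
elim: x p s => [|a x IH] p [|r s] //= /andP[H1 H2] [|k] //= Hk.
exact: (IH r s H2 k Hk).
Qed.

Lemma mpri_cat (S : finType) (A : pa S) (s1 s2 : seq (pa_Q A)) :
  mpri (s1 ++ s2) = maxn (mpri s1) (mpri s2).
Proof. by rewrite /mpri big_cat. Qed.

Lemma pth_cat (S : finType) (A : pa S) (p : pa_Q A) x z q m :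
  pth p (x ++ z) q m <-> exists r m1 m2, pth p x r m1 /\ pth r z q m2 /\ m = maxn m1 m2.
Proof.
split.
- move=> [s [Hs [Hl Hm]]].
  have Hsz := steps_size Hs. rewrite size_cat in Hsz.
  have Ht : size (take (size x) s) = size x by rewrite size_takel // Hsz leq_addr.
  move: Hs Hl Hm; rewrite -(cat_take_drop (size x) s) steps_cat // => /andP[H1 H2] Hl Hm.
  exists (last p (take (size x) s)), (mpri (take (size x) s)), (mpri (drop (size x) s)).
  split; first by exists (take (size x) s).
  split; last by rewrite Hm mpri_cat.
  exists (drop (size x) s); split => //; split => //. by rewrite -Hl last_cat.
- move=> [r [m1 [m2 [[s1 [H1 [L1 M1]]] [[s2 [H2 [L2 M2]]] ->]]]]].
  exists (s1 ++ s2); rewrite steps_cat ?(steps_size H1) // H1 L1 H2 /=.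
  by rewrite last_cat L1 L2 mpri_cat M1 M2.
Qed.

Lemma mpri_mem (S : finType) (A : pa S) (s : seq (pa_Q A)) :
  s != [::] -> mpri s \in [seq pa_pri r | r <- s].
Proof.
elim: s => [|r s IH] //= _.
have E : mpri (r :: s) = maxn (pa_pri r) (mpri s) by rewrite /mpri big_cons.
rewrite E in_cons.
case: s IH E => [|r' s'] IH E.
  by rewrite /mpri big_nil maxn0 eqxx.
have := IH isT. case: (leqP (pa_pri r) (mpri (r' :: s'))) => H.
  by move=> ->; rewrite orbT.
by rewrite eqxx.
Qed.

Definition plist (S : finType) (A : pa S) := undup [seq pa_pri q | q <- enum (pa_Q A)].

Lemma pth_pri (S : finType) (A : pa S) (p : pa_Q A) x q m :
  0 < size x -> pth p x q m -> m \in plist A.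
Proof.
move=> Hx [s [Hs [_ ->]]].
have Hne : s != [::] by rewrite -size_eq0 (steps_size Hs) -lt0n.
have /mapP[r _ ->] := mpri_mem Hne.
by rewrite mem_undup; apply: map_f; rewrite mem_enum.
Qed.

Definition dec (P : Prop) : bool := if excluded_middle_informative P then true else false.

Lemma decE (P Q : Prop) : dec P = dec Q <-> (P <-> Q).
Proof.
rewrite /dec; case: excluded_middle_informative => HP;
  case: excluded_middle_informative => HQ; split => H //; try tauto;
  exfalso; firstorder.
Qed.

Definition trip (S : finType) (A : pa S) :=
  [seq (pq, m) | pq <- [seq (p, q) | p <- enum (pa_Q A), q <- enum (pa_Q A)], m <- plist A].
Definition vbits (S : finType) (A : pa S) (x : seq S) :=
  [seq dec (pth t.1.1 x t.1.2 t.2) | t <- trip A].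
Definition ubits (S : finType) (A : pa S) (x : seq S) :=
  [seq dec (reach A x q) | q <- enum (pa_Q A)].
Definition Vequiv (S : finType) (A : pa S) x y :=
  forall (p q : pa_Q A) m, pth p x q m <-> pth p y q m.
Definition Uequiv (S : finType) (A : pa S) x y :=
  forall (q : pa_Q A), reach A x q <-> reach A y q.

Lemma size_vbits (S : finType) (A : pa S) x : size (vbits A x) = nstates A ^ 2 * npri A.
Proof. by rewrite size_map !size_allpairs -cardE mulnn. Qed.

Lemma size_ubits (S : finType) (A : pa S) x : size (ubits A x) = nstates A.
Proof. by rewrite size_map -cardE. Qed.

Lemma vbits_equiv (S : finType) (A : pa S) x y :
  0 < size x -> 0 < size y -> vbits A x = vbits A y -> Vequiv A x y.
Proof.
move=> Hx Hy /eq_in_map H p q m.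
case: (boolP (m \in plist A)) => Hm.
  apply/decE; apply: (H ((p, q), m)); apply: allpairs_f => //.
  by apply: allpairs_f; rewrite mem_enum.
split => Hp; exfalso; move/negP: Hm; apply.
  exact: pth_pri Hp.
exact: pth_pri Hp.
Qed.

Lemma equiv_vbits (S : finType) (A : pa S) x y : Vequiv A x y -> vbits A x = vbits A y.
Proof. move=> H; apply/eq_in_map => t _; apply/decE; apply: H. Qed.

Lemma Vequiv_cat (S : finType) (A : pa S) x y z : Vequiv A x y -> Vequiv A (x ++ z) (y ++ z).
Proof.
move=> H p q m; rewrite !pth_cat; split; move=> [r [m1 [m2 [H1 [H2 ->]]]]];
  exists r, m1, m2; (split; last by []); apply/H; done.
Qed.

Lemma ubits_equiv (S : finType) (A : pa S) x y : ubits A x = ubits A y -> Uequiv A x y.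
Proof. move=> /eq_in_map H q; apply/decE; apply: H; by rewrite mem_enum. Qed.

Lemma equiv_ubits (S : finType) (A : pa S) x y : Uequiv A x y -> ubits A x = ubits A y.
Proof. move=> H; apply/eq_in_map => t _; apply/decE; apply: H. Qed.

Lemma reach_cat (S : finType) (A : pa S) x z (q : pa_Q A) :
  reach A (x ++ z) q <-> exists r, reach A x r /\ exists m, pth r z q m.
Proof.
split.
- move=> [p [Hp [m /pth_cat [r [m1 [m2 [H1 [H2 _]]]]]]]].
  exists r; split; [exists p; split => //; by exists m1 | by exists m2].
- move=> [r [[p [Hp [m1 H1]]] [m2 H2]]].
  exists p; split => //; exists (maxn m1 m2); apply/pth_cat; by exists r, m1, m2.
Qed.

Lemma Uequiv_cat (S : finType) (A : pa S) x y z : Uequiv A x y -> Uequiv A (x ++ z) (y ++ z).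
Proof.
move=> H q; rewrite !reach_cat; split; move=> [r [H1 H2]]; exists r; split => //; by apply/H.
Qed.

Lemma flatten_eq_inv (S : finType) (L : seq (pa S)) (f g : pa S -> seq bool) :
  (forall A, size (f A) = size (g A)) -> flatten (map f L) = flatten (map g L) ->
  forall A, List.In A L -> f A = g A.
Proof.
move=> Hs; elim: L => [|a L IH] //= /eqP; rewrite eqseq_cat // => /andP[/eqP h1 /eqP h2] A [<-|HA] //.
exact: IH.
Qed.

Lemma flatten_eq (S : finType) (L : seq (pa S)) (f g : pa S -> seq bool) :
  (forall A, List.In A L -> f A = g A) -> flatten (map f L) = flatten (map g L).
Proof.
elim: L => [|a L IH] //= H; rewrite H; last by left.
by rewrite IH // => A HA; apply: H; right.
Qed.

Lemma size_flatten_map (S : finType) (L : seq (pa S)) (f : pa S -> seq bool) :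
  size (flatten (map f L)) = \sum_(A <- L) size (f A).
Proof. by elim: L => [|a L IH]; rewrite /= ?big_nil ?big_cons ?size_cat ?IH. Qed.

Lemma cut (T : Type) (code : seq T -> seq bool) K lo :
  (forall x, size (code x) = K) ->
  (forall x y z, lo <= size x -> lo <= size y -> code x = code y -> code (x ++ z) = code (y ++ z)) ->
  forall x, lo <= size x -> exists x', code x' = code x /\ lo <= size x' /\ size x' < lo + 2 ^ K.
Proof.
move=> Hsz Hc x; have : size x <= size x by [].
move: {2}(size x) => n; elim: n x => [|n IH] x Hxn Hlo.
  exists x; split => //; split => //; have -> : size x = 0 by lia.
  by rewrite addn_gt0 expn_gt0 orbT.
case: (ltnP (size x) (lo + 2 ^ K)) => Hlt; first by exists x.
have Hs : forall s, size (code s) == K by move=> s; rewrite Hsz.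
pose f (i : 'I_(2 ^ K).+1) : K.-tuple bool := Tuple (Hs (take (lo + i) x)).
have Hni : ~ injective f.
  move=> Hinj; have := leq_card _ Hinj.
  by rewrite card_ord card_tuple card_bool ltnn.
have [i [j [Hij Hf]]] : exists i j : 'I_(2 ^ K).+1, i < j /\ f i = f j.
  apply: NNPP => Hne; apply: Hni => i j Hf.
  case: (ltngtP i j) => H.
  - by exfalso; apply: Hne; exists i, j.
  - by exfalso; apply: Hne; exists j, i.
  - exact: val_inj.
have Hc' : code (take (lo + i) x) = code (take (lo + j) x) by move: Hf => /(congr1 val).
have Hj : lo + j <= size x.
  apply: leq_trans _ Hlt; rewrite leq_add2l -ltnS; exact: ltn_ord.
have Hi : lo + i <= size x by apply: leq_trans Hj; rewrite leq_add2l ltnW.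
set x' := take (lo + i) x ++ drop (lo + j) x.
have Hx'c : code x' = code x.
  rewrite /x' (Hc _ (take (lo + j) x)) ?cat_take_drop // size_takel // leq_addr //.
have Hsx' : size x' + (j - i) = size x.
  rewrite /x' size_cat size_takel // size_drop; lia.
have Hlo' : lo <= size x' by rewrite /x' size_cat size_takel // -addnA leq_addr.
have Hlt' : size x' <= n.
  have : 0 < j - i by rewrite subn_gt0.
  lia.
have [y [H1 [H2 H3]]] := IH x' Hlt' Hlo'.
exists y; rewrite H1 Hx'c; by [].
Qed.

Definition LS (f : nat -> nat) p :=
  (forall N, exists i, N <= i /\ f i = p) /\ (exists N, forall i, N <= i -> f i <= p).

Lemma acc_LS f B p : (forall i, f i <= B) -> inf_often f p ->
  (forall q, inf_often f q -> q <= p) -> LS f p.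
Proof.
move=> Hf Hinf Hmax; split; first exact: Hinf.
have Hd : forall d, exists N, forall i, N <= i -> f i <= p \/ p + d < f i.
  elim => [|d [N HN]].
    exists 0 => i _; case: (leqP (f i) p) => H; [by left | by right; rewrite addn0].
  have Hno : ~ inf_often f (p + d.+1) by move=> /Hmax; lia.
  have [N' HN'] : exists N', forall i, N' <= i -> f i <> p + d.+1.
    apply: NNPP => H; apply: Hno => M; apply: NNPP => H'; apply: H.
    exists M => i Hi Hfi; apply: H'; by exists i.
  exists (maxn N N') => i Hi.
  have := HN i (leq_trans (leq_maxl _ _) Hi).
  have := HN' i (leq_trans (leq_maxr _ _) Hi). lia.
have [N HN] := Hd B; exists N => i Hi.
have := HN i Hi; have := Hf i; lia.
Qed.

Lemma LS_acc f p : LS f p -> inf_often f p /\ (forall q, inf_often f q -> q <= p).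
Proof.
move=> [Hio [N HN]]; split => // q Hq.
have [i [Hi <-]] := Hq N; exact: HN.
Qed.

Lemma bigmax_att (I : eqType) (s : seq I) (F : I -> nat) :
  s != [::] -> exists k, k \in s /\ F k = \max_(k <- s) F k.
Proof.
elim: s => [|r s IH] //= _.
rewrite big_cons.
case: s IH => [|r' s'] IH.
  by exists r; rewrite big_nil maxn0 mem_seq1.
have [k [Hk Hfk]] := IH isT.
case: (leqP (F r) (\max_(k <- r' :: s') F k)) => H.
  by exists k; rewrite in_cons Hk orbT.
by exists r; rewrite in_cons eqxx.
Qed.

Lemma LS_block f s0 L M p : 0 < L ->
  (forall t, M t = \max_(k <- iota (s0 + t * L) L) f k.+1) -> (LS f p <-> LS M p).
Proof.
move=> HL HM.
have Hdec : forall i, s0 < i -> exists t k, k < L /\ i = s0 + t * L + k + 1.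
  move=> i Hi; exists ((i - s0).-1 %/ L), ((i - s0).-1 %% L); split; first exact: ltn_pmod.
  have := divn_eq (i - s0).-1 L; lia.
have Hmem : forall t k, k < L -> s0 + t * L + k \in iota (s0 + t * L) L.
  by move=> t k Hk; rewrite mem_iota leq_addr ltn_add2l.
split.
- move=> [Hio [N HN]]; split.
  + move=> N'.
    have [i [Hi Hfi]] := Hio (s0 + (N' + N) * L + 1).
    have [t [k [Hk Hik]]] := Hdec i ltac:(lia).
    have Ht : N' + N <= t by nia.
    exists t; split; first lia.
    apply/eqP; rewrite eqn_leq HM; apply/andP; split.
      apply/bigmax_leqP_seq => k' Hk' _; apply: HN.
      move: Hk'; rewrite mem_iota; nia.
    rewrite -Hfi Hik addn1; exact: (@leq_bigmax_seq _ _ xpredT (fun k => f k.+1) _ (Hmem t k Hk) isT).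
  + exists N => t Ht; rewrite HM; apply/bigmax_leqP_seq => k Hk _; apply: HN.
    move: Hk; rewrite mem_iota; nia.
- move=> [Hio [T HT]]; split.
  + move=> N; have [t [Ht HMt]] := Hio N.
    have Hne : iota (s0 + t * L) L != [::] by rewrite -size_eq0 size_iota -lt0n.
    have [k [Hk Hfk]] := bigmax_att (fun k => f k.+1) Hne.
    exists k.+1; split; last by rewrite Hfk -HM.
    move: Hk; rewrite mem_iota; nia.
  + exists (s0 + T * L + 1) => i Hi.
    have [t [k [Hk Hik]]] := Hdec i ltac:(lia).
    have Ht : T <= t by nia.
    apply: leq_trans (HT t Ht); rewrite HM Hik addn1.
    exact: (@leq_bigmax_seq _ _ xpredT (fun k => f k.+1) _ (Hmem t k Hk) isT).
Qed.

Lemma run_steps (S : finType) (A : pa S) (w : nat -> S) (rho : nat -> pa_Q A) :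
  (forall i, rho i.+1 \in pa_delta (rho i) (w i)) -> forall l i,
  steps (rho i) [seq w k | k <- iota i l] [seq rho k.+1 | k <- iota i l] /\
  last (rho i) [seq rho k.+1 | k <- iota i l] = rho (i + l).
Proof.
move=> Hr; elim => [|l IH] i /=; first by rewrite addn0.
have [H1 H2] := IH i.+1; rewrite Hr H1 H2; split => //; by rewrite addSnnS.
Qed.

Lemma upw_u (S : finType) (x0 : S) u v : [seq upw x0 u v k | k <- iota 0 (size u)] = u.
Proof.
rewrite -{3}(mkseq_nth x0 u) /mkseq; apply/eq_in_map => k.
by rewrite mem_iota /upw add0n => /andP[_ ->].
Qed.

Lemma upw_v (S : finType) (x0 : S) u v t k : k < size v ->
  upw x0 u v (size u + t * size v + k) = nth x0 v k.
Proof.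
move=> Hk; rewrite /upw ltnNge -addnA leq_addr /= addKn modnMDl modn_small //.
Qed.

Lemma upw_vs (S : finType) (x0 : S) u v t : 0 < size v ->
  [seq upw x0 u v k | k <- iota (size u + t * size v) (size v)] = v.
Proof.
move=> Hv; rewrite -[size u + t * size v]addn0 iotaDl -map_comp.
rewrite -[RHS](mkseq_nth x0 v) /mkseq; apply/eq_in_map => k.
by rewrite mem_iota add0n => /andP[_ Hk] /=; rewrite upw_v.
Qed.

Lemma transfer (S : finType) (x0 : S) (A : pa S) u v u' v' :
  0 < size v -> 0 < size v' ->
  (forall q, reach A u q -> reach A u' q) ->
  (forall (p q : pa_Q A) m, pth p v q m -> pth p v' q m) ->
  accepts A (upw x0 u v) -> accepts A (upw x0 u' v').
Proof.
move=> Hv Hv' HU HV [rho [[H0 Hrun] [p [Hinf [Hmax Hev]]]]].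
set L := size v in Hv *. set L' := size v' in Hv' *.
set s0 := size u. set s0' := size u'.
pose B := \max_(q : pa_Q A) pa_pri q.
have HB : forall q : pa_Q A, pa_pri q <= B by move=> q; exact: leq_bigmax.
pose f := fun i => pa_pri (rho i).
have HLS : LS f p := @acc_LS f B p (fun i => HB (rho i)) Hinf Hmax.
pose a t := rho (s0 + t * L).
pose M t := \max_(k <- iota (s0 + t * L) L) f k.+1.
have HLSM : LS M p := (@LS_block f s0 L M p Hv (fun t => erefl)).1 HLS.
have Hpath : forall t, pth (a t) v (a t.+1) (M t).
  move=> t; have [Hs Hl] := run_steps Hrun L (s0 + t * L).
  exists [seq rho k.+1 | k <- iota (s0 + t * L) L]; split; first by rewrite upw_vs in Hs.
  split; first by rewrite Hl /a mulSn [L + _]addnC addnA.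
  by rewrite /mpri /M big_map.
have Hreach : reach A u (a 0).
  have [Hs Hl] := run_steps Hrun s0 0.
  exists (rho 0); split => //.
  exists (mpri [seq rho k.+1 | k <- iota 0 s0]), [seq rho k.+1 | k <- iota 0 s0].
  split; first by move: Hs; rewrite /s0 upw_u.
  by rewrite Hl /a mul0n addn0 add0n.
have [i0 [Hi0 [m0 [su [Hsu [Hlsu _]]]]]] := HU _ Hreach.
have Hseg : forall t, exists s, steps (a t) v' s /\ last (a t) s = a t.+1 /\ M t = mpri s :=
  fun t => HV _ _ _ (Hpath t).
pose seg t := proj1_sig (constructive_indefinite_description _ (Hseg t)).
have Hsegt : forall t, steps (a t) v' (seg t) /\ last (a t) (seg t) = a t.+1 /\ M t = mpri (seg t) :=
  fun t => proj2_sig (constructive_indefinite_description _ (Hseg t)).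
pose rho' i := if i <= s0' then nth i0 (i0 :: su) i
               else nth i0 (seg ((i - s0').-1 %/ L')) ((i - s0').-1 %% L').
have Hsu_size : size su = s0' := steps_size Hsu.
have Hseg_size t : size (seg t) = L' := steps_size (Hsegt t).1.
have R1 : forall t k, k < L' -> rho' (s0' + t * L' + k.+1) = nth i0 (seg t) k.
  move=> t k Hk; rewrite /rho' ifN; last by rewrite -ltnNge; lia.
  have -> : (s0' + t * L' + k.+1 - s0').-1 = t * L' + k by lia.
  by rewrite divnMDl // divn_small // addn0 modnMDl modn_small.
have R : forall t k, k <= L' -> rho' (s0' + t * L' + k) = nth (a t) (a t :: seg t) k.
  move=> t [|k] Hk.
  - case: t => [|t].
    + rewrite mul0n !addn0 /rho' leqnn /=.
      have := nth_last i0 (i0 :: su); rewrite /= Hsu_size => ->; exact: Hlsu.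
    + have -> : s0' + t.+1 * L' + 0 = s0' + t * L' + (L'.-1).+1 by rewrite mulSn; lia.
      rewrite R1; last by lia.
      rewrite -(Hseg_size t) (set_nth_default (a t)) ?nth_last ?(Hsegt t).2.1 //.
      rewrite (Hseg_size t); lia.
  - by rewrite R1 //= (set_nth_default (a t)) // Hseg_size.
have Hrun' : is_run (upw x0 u' v') rho'.
  split; first by rewrite /rho' leq0n /=.
  move=> i; case: (ltnP i s0') => Hi.
  - rewrite /rho' ifT; last by lia.
    rewrite ifT; last by lia.
    have -> : upw x0 u' v' i = nth x0 u' i by rewrite /upw Hi.
    exact: (steps_nth i0 x0 Hsu Hi).
  - have [t1 [k1 [Hk1 E]]] : exists t k, k < L' /\ i = s0' + t * L' + k.
      exists ((i - s0') %/ L'), ((i - s0') %% L'); split; first exact: ltn_pmod.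
      have := divn_eq (i - s0') L'; lia.
    rewrite E -addnS !R //; last by lia.
    rewrite upw_v //.
    exact: (steps_nth (a t1) x0 (Hsegt t1).1 Hk1).
exists rho'; split => //; exists p.
pose f' i := pa_pri (rho' i).
have HM' : forall t, M t = \max_(k <- iota (s0' + t * L') L') f' k.+1.
  move=> t; rewrite (Hsegt t).2.2 /mpri.
  rewrite -[s0' + t * L']addn0 iotaDl big_map.
  rewrite (big_nth i0) (Hseg_size t) /index_iota subn0.
  apply: eq_big_seq => j; rewrite mem_iota => /andP[_ Hj].
  by rewrite /f' -addnS R1.
have HLS' : LS f' p := (@LS_block f' s0' L' M p Hv' HM').2 HLSM.
have [Hinf' Hmax'] := LS_acc HLS'.
by split.
Qed.

Theorem corollary7 (S : finType) (x0 : S) (P N : seq (pa S)) (u v : seq S) :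
  0 < size v ->
  (forall A, List.In A P -> accepts A (upw x0 u v)) ->
  (forall A, List.In A N -> ~ accepts A (upw x0 u v)) ->
  exists u' v' : seq S,
    0 < size v' /\
    (forall A, List.In A P -> accepts A (upw x0 u' v')) /\
    (forall A, List.In A N -> ~ accepts A (upw x0 u' v')) /\
    size u' + size v' <=
      2 ^ (\sum_(A <- P ++ N) nstates A) - 1
      + 2 ^ (\sum_(A <- P ++ N) nstates A ^ 2 * npri A).
Proof.
move=> Hv HP HN.
set L := P ++ N.
pose codeU := fun x => flatten [seq ubits A x | A <- L].
pose codeV := fun x => flatten [seq vbits A x | A <- L].
have HszU : forall x, size (codeU x) = \sum_(A <- L) nstates A.
  by move=> x; rewrite /codeU size_flatten_map; apply: eq_bigr => A _; exact: size_ubits.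
have HszV : forall x, size (codeV x) = \sum_(A <- L) nstates A ^ 2 * npri A.
  by move=> x; rewrite /codeV size_flatten_map; apply: eq_bigr => A _; exact: size_vbits.
have HcU : forall x y z, 0 <= size x -> 0 <= size y -> codeU x = codeU y ->
    codeU (x ++ z) = codeU (y ++ z).
  move=> x y z _ _ H; apply: flatten_eq => A HA.
  apply: equiv_ubits; apply: Uequiv_cat; apply: ubits_equiv.
  apply: (@flatten_eq_inv S L (fun B => ubits B x) (fun B => ubits B y) _ H A HA) => B; by rewrite !size_ubits.
have HcV : forall x y z, 1 <= size x -> 1 <= size y -> codeV x = codeV y ->
    codeV (x ++ z) = codeV (y ++ z).
  move=> x y z Hx Hy H; apply: flatten_eq => A HA.
  apply: equiv_vbits; apply: Vequiv_cat; apply: vbits_equiv => //.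
  apply: (@flatten_eq_inv S L (fun B => vbits B x) (fun B => vbits B y) _ H A HA) => B; by rewrite !size_vbits.
have [u' [Hu'c [_ Hu's]]] := cut HszU HcU (leq0n (size u)).
have [v' [Hv'c [Hv'1 Hv's]]] := cut HszV HcV Hv.
have EU : forall A, List.In A L -> Uequiv A u' u.
  move=> A HA; apply: ubits_equiv.
  apply: (@flatten_eq_inv S L (fun B => ubits B u') (fun B => ubits B u) _ Hu'c A HA) => B; by rewrite !size_ubits.
have EV : forall A, List.In A L -> Vequiv A v' v.
  move=> A HA; apply: vbits_equiv => //.
  apply: (@flatten_eq_inv S L (fun B => vbits B v') (fun B => vbits B v) _ Hv'c A HA) => B; by rewrite !size_vbits.
exists u', v'; split => //; split; [|split].
- move=> A HA.
  have HAL : List.In A L by apply: List.in_or_app; left.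
  apply: (@transfer S x0 A u v u' v' Hv Hv'1 _ _ (HP A HA)).
  + by move=> q /(EU A HAL q).
  + by move=> p q m /(EV A HAL p q m).
- move=> A HA Hacc.
  have HAL : List.In A L by apply: List.in_or_app; right.
  apply: (HN A HA); apply: (@transfer S x0 A u' v' u v Hv'1 Hv _ _ Hacc).
  + by move=> q /(EU A HAL q).
  + by move=> p q m /(EV A HAL p q m).
- move: Hu's Hv's; rewrite add0n add1n.
  move: (2 ^ _) (2 ^ _) => a b; lia.
Qed.
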